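(* Consider observations $y_i = y(t_i) = F(x_0)(t_i) + \epsilon_i$, $i=1,\dots,n$, where $F:\mathbf X\to\mathbf Y$ is a known linear operator between Hilbert spaces of real functions, $t_1,\dots,t_n$ is a fixed design, and $\epsilon_1,\dots,\epsilon_n$ are independent errors with zero mean and finite variance $\sigma^2$. Let $(\lambda_j;\varphi_j,\psi_j)_{j=1,\dots,n}$ be a singular system of $F$ as described in the context, write $x_0=\sum_{j=1}^n x_{j,0}\psi_j$, fix a constant $c>0$ and put $\mu_j = \frac{2c}{\lambda_j}\sqrt{\frac{\log n}{n}}$, $j=1,\dots,n$. Let $$\hat x_n=\sum_{j=1}^n \hat x_j\psi_j \in \arg\min_{x=\sum_{j=1}^n x_j\psi_j\in \mathbf X}\Big[\sum_{j=1}^n\Big|\Big\langle y-F(x),\frac{\varphi_j}{\lambda_j}\Big\rangle_n\Big|^2+\sum_{j=1}^n\mu_j|x_j|\Big].$$ Let $x_*=\sum_{j=1}^n x_{j,*}\psi_j$ with $x_{j,*}=x_{j,0}$ if $|x_{j,0}|>\mu_j$ and $x_{j,*}=0$ otherwise, let $\mathcal J_n=\{j\in\{1,\dots,n\}: |x_{j,0}|>\mu_j\}$, let $V_j=\frac1n\sum_{i=1}^n\varphi_j(t_i)\epsilon_i$, and let $B_n$ be the event $\{\max_{j=1,\dots,n}|V_j|\le c\sqrt{\log n/n}\}$. Then on $B_n$, $$\|\hat x_n-x_0\|_n^2\le \|x_*-x_0\|_n^2+4c\sqrt{\frac{\log n}{n}}\sum_{j\in\mathcal J_n}\frac{|\hat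 x_j-x_{j,0}|}{\lambda_j}.$$
   Context: The empirical norm is $\|y\|_n^2=\frac1n\sum_{i=1}^n y(t_i)^2$ with empirical inner product $\langle y,z\rangle_n=\frac1n\sum_{i=1}^n y(t_i)z(t_i)$; for $y=(y_i)$ a data vector, $\langle y,\varphi\rangle_n=\frac1n\sum_i y_i\varphi(t_i)$. The singular system satisfies $F\psi_j=\lambda_j\varphi_j$, $F^*\varphi_j=\lambda_j\psi_j$, where $\lambda_j^2>0$ are the nonzero eigenvalues of $F^*F$ in decreasing order, and $\{\psi_j\}$, $\{\varphi_j\}$ are complete orthonormal systems with respect to $\|\cdot\|_n$ of eigenvectors of $F^*F$ and $FF^*$ respectively; thus $Fx=\sum_j\lambda_j\langle x,\psi_j\rangle\varphi_j$, and for $x=\sum_j x_j\psi_j$, $\|x\|_n^2=\sum_j x_j^2$. *)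

(* Defs.v *)
From mathcomp Require Import all_boot all_order all_algebra.
From mathcomp Require Import reals exp.
Set Implicit Arguments. Unset Strict Implicit. Unset Printing Implicit Defensive.
Import Order.TTheory GRing.Theory Num.Theory.
Local Open Scope ring_scope.

Section Defs.
Variables (R : realType) (T : Type) (n : nat) (t : 'I_n -> T).

Definition emp_inner (f g : T -> R) : R :=
  n%:R^-1 * \sum_(i < n) f (t i) * g (t i).

Definition emp_norm2 (f : T -> R) : R := emp_inner f f.

Definition emp_inner_data (y : 'I_n -> R) (g : T -> R) : R :=
  n%:R^-1 * \sum_(i < n) y i * g (t i).

Definition comb (psi : 'I_n -> T -> R) (a : 'I_n -> R) : T -> R :=
  fun s => \sum_(j < n) a j * psi j s.

Definition rate : R := Num.sqrt (ln n%:R / n%:R).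

End Defs.

(* Main.v *)
Require Import Defs.
From mathcomp Require Import all_boot all_order all_algebra.
From mathcomp Require Import reals exp.
From mathcomp Require Import ring lra.
From Stdlib Require Import FunctionalExtensionality.
Import Order.TTheory GRing.Theory Num.Theory.
Local Open Scope ring_scope.

Lemma F_sum (R : realType) (T : Type) (F : (T -> R) -> (T -> R))
  (Hlin : forall (a : R) (f g : T -> R),
      F (fun s => a * f s + g s) = (fun s => a * F f s + F g s))
  (I : Type) (s : seq I) (b : I -> R) (g : I -> T -> R) :
  F (fun x => \sum_(k <- s) b k * g k x) = fun x => \sum_(k <- s) b k * F (g k) x.
Proof.
have F0 : F (fun _ => 0) = fun _ => 0.
  have := Hlin 1 (fun _ => 0) (fun _ => 0).
  have -> : (fun s : T => 1 * (fun _ : T => 0 : R) s + (fun _ => 0) s) = fun _ => 0.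
    by apply: functional_extensionality => x; rewrite mul1r addr0.
  move=> H; apply: functional_extensionality => x.
  have := congr1 (fun f => f x) H => /=; rewrite mul1r => E; lra.
elim: s => [|k s IH].
  have -> : (fun x => \sum_(k <- [::]) b k * g k x) = fun _ => 0.
    by apply: functional_extensionality => x; rewrite big_nil.
  by rewrite F0; apply: functional_extensionality => x; rewrite big_nil.
have -> : (fun x => \sum_(j <- k :: s) b j * g j x) =
   (fun x => b k * g k x + (fun x => \sum_(j <- s) b j * g j x) x).
  by apply: functional_extensionality => x; rewrite big_cons.
rewrite (Hlin (b k) (g k) (fun x => \sum_(j <- s) b j * g j x)) IH.
by apply: functional_extensionality => x; rewrite big_cons.
Qed.

Lemma pq_le (R : realType) (p q : R) : p * q <= `|p| * `|q|.
Proof. by rewrite -normrM ler_norm. Qed.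

Lemma coordJ (R : realType) (a x v d : R) : 0 <= d -> `|v| <= d ->
  (x - a) ^+ 2 - (a - a) ^+ 2 - 4 * d * `|x - a| <=
  ((a - x + v) ^+ 2 + 2 * d * `|x|) - ((a - a + v) ^+ 2 + 2 * d * `|a|).
Proof.
move=> d0 vd.
have h1 := pq_le _ (x - a) v.
have h2 : `|x - a| * `|v| <= `|x - a| * d by rewrite ler_wpM2l.
have h3 : d * (`|a| - `|x|) <= d * `|x - a|.
  by rewrite ler_wpM2l // (distrC x a) (lerB_dist a x).
rewrite subrr expr0n /= subr0 add0r.
nra.
Qed.

Lemma coordN (R : realType) (a x v d : R) : `|v| <= d ->
  (x - a) ^+ 2 - (0 - a) ^+ 2 - 0 <=
  ((a - x + v) ^+ 2 + 2 * d * `|x|) - ((a - 0 + v) ^+ 2 + 2 * d * `|0 : R|).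
Proof.
move=> vd.
have h1 := pq_le _ x v.
have h2 : `|x| * `|v| <= `|x| * d by rewrite ler_wpM2l.
rewrite normr0 subr0 mulr0 addr0.
nra.
Qed.

Lemma norm_coef (R : realType) (T : Type) (n : nat) (t : 'I_n -> T)
  (psi : 'I_n -> T -> R) (k l : 'I_n) (u : 'I_n -> R) :
  n%:R^-1 * \sum_(i < n) (u k * psi k (t i)) * (u l * psi l (t i)) =
  u k * u l * emp_inner t (psi k) (psi l).
Proof.
rewrite /emp_inner mulrCA; congr (_ * _); rewrite mulr_sumr.
by apply: eq_bigr => i _; ring.
Qed.

Lemma norm_comb (R : realType) (T : Type) (n : nat) (t : 'I_n -> T)
  (psi : 'I_n -> T -> R) (w1 w2 : 'I_n -> R) :
  (forall j k, emp_inner t (psi j) (psi k) = (j == k)%:R) ->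
  emp_norm2 t (fun s => comb psi w1 s - comb psi w2 s) =
  \sum_(k < n) (w1 k - w2 k) ^+ 2.
Proof.
move=> Ho; rewrite /emp_norm2 {1}/emp_inner /comb.
set u := fun k => w1 k - w2 k.
have E : forall i, \sum_(j < n) w1 j * psi j (t i) - \sum_(j < n) w2 j * psi j (t i)
   = \sum_(k < n) u k * psi k (t i).
  by move=> i; rewrite -sumrB; apply: eq_bigr => k _; rewrite /u mulrBl.
under eq_bigr do rewrite E mulr_suml.
rewrite exchange_big mulr_sumr; apply: eq_bigr => k _.
under eq_bigr do rewrite mulr_sumr.
rewrite exchange_big mulr_sumr (bigD1 k) //= norm_coef Ho eqxx mulr1 big1 ?addr0 //.
by move=> l /negbTE kl; rewrite norm_coef Ho eq_sym kl mulr0.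
Qed.

Lemma fin_step (R : realType) (A B C D E : R) :
  A - B - C <= D - E -> D <= E -> A <= B + C.
Proof. move=> h1 h2; lra. Qed.

Theorem theorem1 (R : realType) (T : Type) (n : nat) (t : 'I_n -> T)
    (F : (T -> R) -> (T -> R))
    (lam : 'I_n -> R) (phi psi : 'I_n -> T -> R)
    (a0 eps xh : 'I_n -> R) (c : R) :
  (* F is linear *)
  (forall (a : R) (f g : T -> R),
      F (fun s => a * f s + g s) = (fun s => a * F f s + F g s)) ->
  (* singular system *)
  (forall j, 0 < lam j) ->
  (forall j k : 'I_n, (j <= k)%N -> lam k <= lam j) ->
  (forall j k, emp_inner t (phi j) (phi k) = (j == k)%:R) ->
  (forall j k, emp_inner t (psi j) (psi k) = (j == k)%:R) ->
  (forall j, F (psi j) = (fun s => lam j * phi j s)) ->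
  0 < c ->
  let r := rate R n in
  let mu := fun j => 2 * c / lam j * r in
  let y := fun i => F (comb psi a0) (t i) + eps i in
  let J := fun b : 'I_n -> R =>
    \sum_(j < n)
       (emp_inner_data t (fun i => y i - F (comb psi b) (t i))
                         (fun s => phi j s / lam j)) ^+ 2
    + \sum_(j < n) mu j * `|b j| in
  (* xh is a minimizer of the penalized criterion *)
  (forall b : 'I_n -> R, J xh <= J b) ->
  let astar := fun j => if mu j < `|a0 j| then a0 j else 0 in
  let V := fun j => n%:R^-1 * \sum_(i < n) phi j (t i) * eps i in
  (* the event B_n *)
  (forall j, `|V j| <= c * r) ->
  emp_norm2 t (fun s => comb psi xh s - comb psi a0 s)
  <= emp_norm2 t (fun s => comb psi astar s - comb psi a0 s)
     + 4 * c * r * \sum_(j < n | mu j < `|a0 j|) `|xh j - a0 j| / lam j.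
Proof.
move=> Hlin Hlam Hmono Hphi Hpsi HF Hc r mu y J Hmin astar V HB.
have HFc : forall b, F (comb psi b) = fun x => \sum_(k < n) b k * (lam k * phi k x).
  move=> b; rewrite /comb (F_sum _ _ _ Hlin).
  by apply: functional_extensionality => x; apply: eq_bigr => k _; rewrite HF.
have coef : forall b j, emp_inner_data t (fun i => y i - F (comb psi b) (t i))
    (fun s => phi j s / lam j) = a0 j - b j + V j / lam j.
  move=> b j; rewrite /emp_inner_data /y !HFc.
  have E1 : forall i : 'I_n,
    (\sum_(k < n) a0 k * (lam k * phi k (t i)) + eps i
      - \sum_(k < n) b k * (lam k * phi k (t i))) * (phi j (t i) / lam j) =
    \sum_(k < n) ((a0 k - b k) * lam k / lam j) * (phi k (t i) * phi j (t i))
      + (phi j (t i) * eps i) / lam j.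
    move=> i; rewrite addrAC -sumrB mulrDl mulr_suml; congr (_ + _).
      by apply: eq_bigr => k _; ring.
    by ring.
  under eq_bigr do rewrite E1.
  rewrite big_split /= mulrDr exchange_big /= mulr_sumr -mulr_suml /V mulrA.
  congr (_ + _).
  have Hk : forall k, n%:R^-1 * \sum_(i < n)
        (a0 k - b k) * lam k / lam j * (phi k (t i) * phi j (t i))
      = (a0 k - b k) * lam k / lam j * (k == j)%:R.
    move=> k; rewrite -(Hphi k j) /emp_inner -mulr_sumr mulrCA //.
  rewrite (bigD1 j) //= Hk eqxx mulr1 mulfK ?gt_eqF // big1 ?addr0 //.
  by move=> k /negbTE kj; rewrite Hk kj mulr0.
have HJ : forall b, J b = \sum_(j < n) ((a0 j - b j + V j / lam j) ^+ 2 + mu j * `|b j|).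
  by move=> b; rewrite /J big_split /=; congr (_ + _); apply: eq_bigr => j _; rewrite coef.
have Hm := Hmin astar; rewrite !HJ in Hm.
rewrite !norm_comb // mulr_sumr big_mkcond /=.
have r0 : 0 <= r by rewrite /r /rate sqrtr_ge0.
have P : \sum_(j < n) ((xh j - a0 j) ^+ 2 - (astar j - a0 j) ^+ 2
     - (if mu j < `|a0 j| then 4 * c * r * (`|xh j - a0 j| / lam j) else 0))
   <= \sum_(j < n) (((a0 j - xh j + V j / lam j) ^+ 2 + mu j * `|xh j|)
     - ((a0 j - astar j + V j / lam j) ^+ 2 + mu j * `|astar j|)).
  apply: ler_sum => j _.
  set d := c * r / lam j.
  have d0 : 0 <= d by rewrite /d divr_ge0 // ?mulr_ge0 // ltW.
  have vd : `|V j / lam j| <= d.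
    rewrite normrM normfV (gtr0_norm (Hlam j)) /d.
    by rewrite ler_wpM2r // invr_ge0 ltW.
  have Hmu : mu j = 2 * d by rewrite /mu /d; ring.
  rewrite /astar Hmu; case: (2 * d < `|a0 j|).
    have -> : 4 * c * r * (`|xh j - a0 j| / lam j) = 4 * d * `|xh j - a0 j|
      by rewrite /d; ring.
    exact: (coordJ _ (a0 j) (xh j) (V j / lam j) d d0 vd).
  exact: (coordN _ (a0 j) (xh j) (V j / lam j) d vd).
rewrite !sumrB in P.
rewrite [X in _ <= _ + X]big_mkcond /=.
exact: (fin_step _ _ _ _ _ _ P Hm).
Qed.
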